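(* Let $\mathbb{F}_Q$ be a prime field, $\mathbb{F}_Q^*=\mathbb{F}_Q\setminus\{0\}$, $\sigma\in\mathbb{N}$, and $H:\{0,1\}^\sigma\to\mathbb{F}_Q$ a function with no collisions on the inputs considered. An OLE tuple $(r_A,r_B,s_A,s_B)$ is generated by drawing $s_A,s_B$ uniformly from $\mathbb{F}_Q$ and $r_B$ uniformly from $\mathbb{F}_Q^*$, independently, and setting $r_A=(s_A+s_B)/r_B$ (so $r_Ar_B=s_A+s_B$); Alice receives $(r_A,s_A)$ and Bob receives $(r_B,s_B)$. Alice has input $x\in\{0,1\}^\sigma$ and Bob has input $y\in\{0,1\}^\sigma$. In the comparison protocol, Alice sends $c=s_A-H(x)$ to Bob, Bob sends $d=(c+H(y)+s_B)/r_B$ to Alice, and Alice outputs ''match'' iff $d=r_A$ (her output is whether $x=y$; Bob has no output). Then the protocol is secure in the semi-honest model: there exist simulators $\mathsf{Sim}_A$ (given $x$, Alice's OLE share and the output) and $\mathsf{Sim}_B$ (given $y$ and Bob's OLE share) whose outputs are identically distributed to Alice's and Bob's respective views in the protocol.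
   Context: Semi-honest security: a party's view consists of its input, its random coins/correlated randomness and all messages it receives; a protocol is secure if each party's view can be simulated from that party's input and output alone (here, perfectly, i.e. with identical distribution). All arithmetic is in $\mathbb{F}_Q$. *)

(* Defs.v *)
From mathcomp Require Import all_boot all_algebra.
Set Implicit Arguments. Unset Strict Implicit. Unset Printing Implicit Defensive.
Import GRing.Theory Num.Theory.
Local Open Scope ring_scope.

Definition bitstring (sigma : nat) := (sigma.-tuple bool).

(* Random coins of the OLE dealer: (s_A, s_B, r_B) with s_A, s_B uniform in
   F_Q and r_B uniform in F_Q^*, independently: uniform distribution on this set. *)
Definition ole_coins (Q : nat) : {set 'F_Q * 'F_Q * 'F_Q} :=
  [set w | w.2 != 0].

Definition ole_sA Q (w : 'F_Q * 'F_Q * 'F_Q) : 'F_Q := w.1.1.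
Definition ole_sB Q (w : 'F_Q * 'F_Q * 'F_Q) : 'F_Q := w.1.2.
Definition ole_rB Q (w : 'F_Q * 'F_Q * 'F_Q) : 'F_Q := w.2.
Definition ole_rA Q (w : 'F_Q * 'F_Q * 'F_Q) : 'F_Q :=
  (ole_sA w + ole_sB w) / ole_rB w.

Definition prob (T : finType) (V : eqType) (S : {set T}) (f : T -> V) (v : V)
  : rat := (#|[set t in S | f t == v]|%:R / #|S|%:R)%R.

Definition msg_c Q sigma (H : bitstring sigma -> 'F_Q) (x : bitstring sigma)
  (w : 'F_Q * 'F_Q * 'F_Q) : 'F_Q := ole_sA w - H x.
Definition msg_d Q sigma (H : bitstring sigma -> 'F_Q) (x y : bitstring sigma)
  (w : 'F_Q * 'F_Q * 'F_Q) : 'F_Q := (msg_c H x w + H y + ole_sB w) / ole_rB w.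

Definition alice_output Q sigma (H : bitstring sigma -> 'F_Q) (x y : bitstring sigma)
  (w : 'F_Q * 'F_Q * 'F_Q) : bool := msg_d H x y w == ole_rA w.

Definition viewA_t Q sigma := (bitstring sigma * ('F_Q * 'F_Q) * 'F_Q)%type.
Definition viewB_t Q sigma := (bitstring sigma * ('F_Q * 'F_Q) * 'F_Q)%type.

Definition viewA Q sigma (H : bitstring sigma -> 'F_Q) (x y : bitstring sigma)
  (w : 'F_Q * 'F_Q * 'F_Q) : viewA_t Q sigma :=
  (x, (ole_rA w, ole_sA w), msg_d H x y w).
Definition viewB Q sigma (H : bitstring sigma -> 'F_Q) (x y : bitstring sigma)
  (w : 'F_Q * 'F_Q * 'F_Q) : viewB_t Q sigma :=
  (y, (ole_rB w, ole_sB w), msg_c H x w).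

(* Coins of the ideal experiment: dealer coins and simulator coins. *)
Definition ideal_coins Q (Omega : finType) : {set ('F_Q * 'F_Q * 'F_Q) * Omega} :=
  [set p | p.1 \in ole_coins Q].

(* Main.v *)
Require Import Defs.
From mathcomp Require Import all_boot all_algebra.
Set Implicit Arguments. Unset Strict Implicit. Unset Printing Implicit Defensive.
Import GRing.Theory Num.Theory.
Local Open Scope ring_scope.

Lemma transfer (T W : finType) (V : eqType) (S : {set T}) (f : T -> V)
  (g : T * W -> V) (phi : T * W -> T * W) (o0 : W) :
  {in [set p | p.1 \in S] &, injective phi} ->
  (forall p, p.1 \in S -> (phi p).1 \in S) ->
  (forall p, p.1 \in S -> g (phi p) = f p.1) ->
  forall v, prob S f v = prob [set p | p.1 \in S] g v.
Proof.
move=> inj into eqg v.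
set I := [set p | p.1 \in S].
have cI : #|I| = (#|S| * #|W|)%N.
  rewrite -cardsT -cardsX; apply: eq_card => p.
  by case: p => a b; rewrite !inE ?andbT.
set A := [set p in I | f p.1 == v].
have cA : #|A| = (#|[set t in S | f t == v]| * #|W|)%N.
  rewrite -cardsT -cardsX; apply: eq_card => p.
  by case: p => a b; rewrite !inE ?andbT.
have sur : phi @: I = I.
  apply/eqP; rewrite eqEcard card_in_imset // leqnn andbT.
  by apply/subsetP => q /imsetP [p]; rewrite inE => pS ->; rewrite inE into.
have eB : [set p in I | g p == v] = phi @: A.
  apply/setP => q; rewrite inE; apply/idP/idP.
    move/andP=> [qI /eqP gq]; move: qI gq; rewrite -{1}sur => /imsetP [p pI ->] gq.
    have pS : p.1 \in S by move: pI; rewrite inE.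
    apply/imsetP; exists p => //; rewrite inE pI /= -eqg //.
    by rewrite gq.
  move/imsetP=> [p]; rewrite inE => /andP [pI /eqP fp] ->.
  have pS : p.1 \in S by move: pI; rewrite inE.
  by rewrite eqg // fp eqxx andbT inE into.
have Wn : #|W| != 0%N by apply/eqP => /card0_eq /(_ o0).
rewrite /prob eB card_in_imset; last by move=> a b /setIdP [aI _] /setIdP [bI _]; apply: inj.
rewrite cA cI !natrM -mulf_div divff ?mulr1 // pnatr_eq0 //.
Qed.

From mathcomp Require Import ring.

Theorem theorem2 (Q sigma : nat) (HQ : prime Q) (H : bitstring sigma -> 'F_Q) :
  exists (Omega : finType)
    (SimA : bitstring sigma -> 'F_Q * 'F_Q -> bool -> Omega -> viewA_t Q sigma)
    (SimB : bitstring sigma -> 'F_Q * 'F_Q -> Omega -> viewB_t Q sigma),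
  forall x y : bitstring sigma, (H x = H y -> x = y) ->
    (forall v : viewA_t Q sigma,
       prob (ole_coins Q) (viewA H x y) v =
       prob (ideal_coins Q Omega)
         (fun p => SimA x (ole_rA p.1, ole_sA p.1) (x == y) p.2) v) /\
    (forall v : viewB_t Q sigma,
       prob (ole_coins Q) (viewB H x y) v =
       prob (ideal_coins Q Omega)
         (fun p => SimB y (ole_rB p.1, ole_sB p.1) p.2) v).
Proof.
pose NZ := {z : 'F_Q | z != 0}.
have nz1 : (1 : 'F_Q) != 0 by apply: oner_neq0.
pose o0 : ('F_Q * NZ)%type := (0, exist _ 1 nz1).
exists ('F_Q * NZ)%type.
exists (fun x s b o => (x, s, if b then s.1 else s.1 + val o.2)).
exists (fun y s o => (y, s, o.1)).
move=> x y Hinj; split=> v.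
- case: (eqVneq x y) => [<-|nxy].
  + apply: (@transfer _ _ _ _ _ _ id o0) => //.
    move=> [[[a b] c] o]; rewrite inE /= => c0.
    rewrite /viewA /msg_d /msg_c /ole_rA /ole_sA /ole_sB /ole_rB /=.
    congr (_, _, _); rewrite addrNK //.
  + have dn : H y - H x != 0.
      by rewrite subr_eq0; apply/eqP => /esym /Hinj /eqP; rewrite (negPf nxy).
    pose phi (p : ('F_Q * 'F_Q * 'F_Q) * ('F_Q * NZ)) :=
      let: ((a, b, c), (o, t)) := p in
      ((a, (a + b) / c * val t - a, val t), (o, insubd t ((H y - H x) / c))).
    apply: (@transfer _ _ _ _ _ _ phi o0).
    * move=> [[[a b] c] [o t]] [[[a' b'] c'] [o' t']]; rewrite !inE /= => c0 c0'.
      move=> E.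
      have e1 := congr1 (fun p => p.1.1.1) E.
      have e2 := congr1 (fun p => p.1.1.2) E.
      have e3 := congr1 (fun p => p.1.2) E.
      have e4 := congr1 (fun p => p.2.1) E.
      have e5 := congr1 (fun p => val p.2.2) E.
      cbv beta iota zeta delta [phi fst snd] in e1, e2, e3, e4, e5.
      have tt : t = t' by apply: val_inj.
      subst a' o' t'.
      move: e5; rewrite !val_insubd !mulf_neq0 ?invr_eq0 //=.
      move=> /(mulfI dn) /invr_inj cc; subst c'.
      move: e2 => /addIr /(mulIf (valP t)) /(mulIf (invr_neq0 c0)) /addrI -> //.
    * by move=> [[[a b] c] [o t]]; rewrite !inE /= => _; apply: (valP t).
    * move=> [[[a b] c] [o t]]; rewrite inE /= => c0.
      rewrite /viewA /msg_d /msg_c /ole_rA /ole_sA /ole_sB /ole_rB; cbn [fst snd].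
      rewrite val_insubd mulf_neq0 ?invr_eq0 //.
      have t0 : val t != 0 := valP t.
      congr (_, (_, _), _); field; by rewrite ?t0 ?c0.
- pose phi (p : ('F_Q * 'F_Q * 'F_Q) * ('F_Q * NZ)) :=
    let: ((a, b, c), (o, t)) := p in ((o, b, c), (a - H x, t)).
  apply: (@transfer _ _ _ _ _ _ phi o0).
  + move=> [[[a b] c] [o t]] [[[a' b'] c'] [o' t']] _ _ E.
    have e1 := congr1 (fun p => p.1.1.1) E.
    have e2 := congr1 (fun p => p.1.1.2) E.
    have e3 := congr1 (fun p => p.1.2) E.
    have e4 := congr1 (fun p => p.2.1) E.
    have e5 := congr1 (fun p => p.2.2) E.
    cbv beta iota zeta delta [phi fst snd] in e1, e2, e3, e4, e5.
    move/addIr: e4 => e4.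
    by subst.
    by move=> [[[a b] c] [o t]]; rewrite !inE.
  + move=> [[[a b] c] [o t]] _; rewrite /viewB /msg_c /ole_sA /ole_sB /ole_rB; cbn [fst snd]. cbv beta iota zeta delta [phi fst snd]; reflexivity.
Qed.
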